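(* Let $\lambda\in\Lambda$. (1) Let $m\ge1$ and $z_0,z_1\in\mathbb C_p$ with $|z_0|=|z_1|=\rho_m$ and $|z_0-z_1|\le S$. Then $|Q_\lambda(z_0)-Q_\lambda(z_1)|\le\rho_{m-1}|z_0-z_1|$. (2) If $z_0,z_1\in\{z:|z-1|<1\}$, then $|Q_\lambda(z_0)-Q_\lambda(z_1)|=p\,|z_0-z_1|$.
   Context: Let $p$ be a prime, $\mathbb C_p$ with $p$-adic absolute value, $|p|=1/p$. $\Lambda=\{\lambda\in\mathbb C_p:|\lambda-1|<1\}$, $P_\lambda(z)=\frac{\lambda}{p}z^p+\left(1-\frac{\lambda}{p}\right)z^{p+1}$, $\rho=p^{-1/(p-1)}$; $S>0$ is defined by $pS^{p-1}=\rho$; the sequence $(\rho_n)_{n\ge0}$ is defined by $\rho_0=1$ and $p\rho_n^p=\rho_{n-1}$ for $n\ge1$. Fix $\hat r\in|\mathbb C_p^*|$, $\hat r>1$, $B=\{z:|z|\le\hat r\}$; $\mathcal H(B)$ is the ring of power series $\sum a_iz^i$ convergent on $B$ with norm $\|f\|_B=\sup_i|a_i|\hat r^{\,i}$. Fix $Q\in\mathcal H(B)$ with $\|Q\|_B<\rho$, $Q^*_\lambda=P_\lambda+Q$, and let $h(\lambda)$ be the unique fixed point of $Q^*_\lambda$ in $\{z:|z-1|\le|Q(1)|/p\}$. Define $Q_\lambda(z)=P_\lambda(z+h(\lambda)-1)+Q(z+h(\lambda)-1)+1-h(\lambda)$ for $z\in B$. *)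

(* Defs.v *)
From HB Require Import structures.
From mathcomp Require Import all_boot all_order all_algebra.
From mathcomp Require Import reals exp.
Set Implicit Arguments. Unset Strict Implicit. Unset Printing Implicit Defensive.
Import Order.TTheory GRing.Theory Num.Theory.
Local Open Scope ring_scope.

(* An abstract model of C_p: an algebraically closed field K with an
   absolute value abs : K -> R which is non-archimedean, satisfies
   |p| = 1/p, and for which K is complete. *)
Record is_Cp (R : realType) (K : closedFieldType) (abs : K -> R) (p : nat) : Prop := {
  Cp_prime : prime p;
  Cp_abs_ge0 : forall x, 0 <= abs x;
  Cp_abs_eq0 : forall x, abs x = 0 -> x = 0;
  Cp_abs0 : abs 0 = 0;
  Cp_absM : forall x y, abs (x * y) = abs x * abs y;
  Cp_ultra : forall x y, abs (x + y) <= Num.max (abs x) (abs y);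
  Cp_absp : abs (p%:R) = (p%:R)^-1;
  Cp_complete : forall u : nat -> K,
      (forall e : R, 0 < e -> exists N, forall m n, (N <= m)%N -> (N <= n)%N ->
          abs (u m - u n) < e) ->
      exists l, forall e : R, 0 < e -> exists N, forall n, (N <= n)%N -> abs (u n - l) < e
}.

Definition series_sums (R : realType) (K : fieldType) (abs : K -> R)
    (a : nat -> K) (z v : K) : Prop :=
  forall e : R, 0 < e -> exists N, forall n, (N <= n)%N ->
    abs (\sum_(i < n) a i * z ^+ i - v) < e.

Definition rho (R : realType) (p : nat) : R := (p%:R) `^ (- ((p%:R - 1)^-1)).

(* S > 0 with p S^(p-1) = rho *)
Definition Sconst (R : realType) (p : nat) : R := (rho R p / p%:R) `^ ((p%:R - 1)^-1).

Fixpoint rhon (R : realType) (p : nat) (n : nat) : R :=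
  match n with
  | 0 => 1
  | n'.+1 => (rhon R p n' / p%:R) `^ ((p%:R)^-1)
  end.

Definition Plam (K : fieldType) (p : nat) (lam z : K) : K :=
  lam / p%:R * z ^+ p + (1 - lam / p%:R) * z ^+ p.+1.

Definition Qlam (K : fieldType) (p : nat) (Qf : K -> K) (lam h z : K) : K :=
  Plam p lam (z + h - 1) + Qf (z + h - 1) + 1 - h.

(* Main.v *)
Require Import Defs.
From HB Require Import structures.
From mathcomp Require Import all_boot all_order all_algebra.
From mathcomp Require Import reals exp.
From mathcomp Require Import ring lra.
Import Order.TTheory GRing.Theory Num.Theory.
Local Open Scope ring_scope.

Lemma abs1 {R : realType} {K : closedFieldType} {abs : K -> R} {p} (HK : is_Cp abs p) : abs 1 = 1.
Proof.
have h := Cp_absM HK 1 1. rewrite mulr1 in h.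
have hn : abs 1 != 0 by apply/eqP => /(Cp_abs_eq0 HK) /eqP; rewrite oner_eq0.
by apply: (mulfI hn); rewrite mulr1 -h.
Qed.

Lemma absN {R : realType} {K : closedFieldType} {abs : K -> R} {p} (HK : is_Cp abs p) x : abs (- x) = abs x.
Proof.
have h1 : abs (-1) = 1.
  have h := Cp_absM HK (-1) (-1). rewrite mulrNN mulr1 (abs1 HK) in h.
  have g := Cp_abs_ge0 HK (-1).
  have : (abs (-1) - 1) * (abs (-1) + 1) = 0 by rewrite -[LHS]/((abs (-1) - 1) * (abs (-1) + 1)) [LHS](_ : _ = abs (-1) * abs (-1) - 1); [rewrite -h subrr| ring].
  move/eqP; rewrite mulf_eq0 => /orP [/eqP|/eqP]; first by move/subr0_eq.
  move=> e; have : 0 < abs (-1) + 1 by rewrite ltr_wpDl. by rewrite e ltxx.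
by rewrite -mulN1r (Cp_absM HK) h1 mul1r.
Qed.

Lemma absX {R : realType} {K : closedFieldType} {abs : K -> R} {p} (HK : is_Cp abs p) x n : abs (x ^+ n) = abs x ^+ n.
Proof. elim: n => [|n IH]; first by rewrite !expr0 (abs1 HK). by rewrite !exprS (Cp_absM HK) IH. Qed.

Lemma absD_le {R : realType} {K : closedFieldType} {abs : K -> R} {p} (HK : is_Cp abs p) x y B :
  abs x <= B -> abs y <= B -> abs (x + y) <= B.
Proof. move=> hx hy; apply: le_trans (Cp_ultra HK x y) _; by rewrite ge_max hx hy. Qed.

Lemma absD_lt {R : realType} {K : closedFieldType} {abs : K -> R} {p} (HK : is_Cp abs p) x y B :
  abs x < B -> abs y < B -> abs (x + y) < B.
Proof. move=> hx hy; apply: le_lt_trans (Cp_ultra HK x y) _; by rewrite gt_max hx hy. Qed.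

Lemma absD_strict {R : realType} {K : closedFieldType} {abs : K -> R} {p} (HK : is_Cp abs p) x y :
  abs y < abs x -> abs (x + y) = abs x.
Proof.
move=> h; apply/eqP; rewrite eq_le; apply/andP; split.
  by apply: (absD_le HK) => //; exact: ltW h.
have e : x = (x + y) + (- y) by rewrite addrK.
have := Cp_ultra HK (x + y) (- y); rewrite -e (absN HK).
rewrite le_max => /orP [//|]. by rewrite leNgt h.
Qed.

Lemma abs_sum {R : realType} {K : closedFieldType} {abs : K -> R} {p} (HK : is_Cp abs p) n (F : 'I_n -> K) B :
  0 <= B -> (forall i, abs (F i) <= B) -> abs (\sum_i F i) <= B.
Proof.
move=> hB hF; apply: (big_ind (fun x => abs x <= B)).
- by rewrite (Cp_abs0 HK).
- by move=> x y; apply: (absD_le HK).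
- by move=> i _; apply: hF.
Qed.

Lemma abs_nat {R : realType} {K : closedFieldType} {abs : K -> R} {p} (HK : is_Cp abs p) n : abs (n%:R : K) <= 1.
Proof.
elim: n => [|n IH]; first by rewrite (Cp_abs0 HK).
by rewrite mulrS; apply: (absD_le HK) => //; rewrite (abs1 HK).
Qed.

Lemma abs_XX {R : realType} {K : closedFieldType} {abs : K -> R} {p} (HK : is_Cp abs p) (r : R) x y n :
  0 <= r -> abs x <= r -> abs y <= r -> abs (x ^+ n.+1 - y ^+ n.+1) <= r ^+ n * abs (x - y).
Proof.
move=> hr hx hy; elim: n => [|n IH]; first by rewrite !expr1 expr0 mul1r.
have -> : x ^+ n.+2 - y ^+ n.+2 = x * (x ^+ n.+1 - y ^+ n.+1) + (x - y) * y ^+ n.+1.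
  by rewrite !exprS; ring.
have g := Cp_abs_ge0 HK.
apply: (absD_le HK); rewrite (Cp_absM HK).
  by rewrite [r ^+ _]exprS -mulrA; apply: ler_pM.
rewrite (absX HK) mulrC; apply: ler_wpM2r => //.
by apply: lerXn2r => //; rewrite nnegrE.
Qed.

Lemma root_pow {R : realType} (x : R) k : 0 <= x -> (0 < k)%N -> (x `^ (k%:R)^-1) ^+ k = x.
Proof.
move=> hx hk; rewrite -powR_mulrn ?powR_ge0 // -powRrM mulVf ?powRr1 //.
by rewrite pnatr_eq0 -lt0n.
Qed.

Lemma natS1 {R : realType} k : ((k.+1)%:R - 1 : R) = k%:R.
Proof. by rewrite mulrSr addrK. Qed.

Lemma rho_pos {R : realType} k : 0 < rho R k.+2.
Proof. by rewrite /rho powR_gt0. Qed.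

Lemma rho_pow {R : realType} k : rho R k.+2 ^+ k.+1 = (k.+2)%:R^-1.
Proof.
rewrite /rho natS1 powRN exprVn root_pow //.
Qed.

Lemma S_pos {R : realType} k : 0 < Sconst R k.+2.
Proof. rewrite /Sconst powR_gt0 // divr_gt0 //; exact: rho_pos. Qed.

Lemma S_pow {R : realType} k : Sconst R k.+2 ^+ k.+1 = rho R k.+2 / (k.+2)%:R.
Proof.
rewrite /Sconst natS1 root_pow // divr_ge0 //; exact/ltW/rho_pos.
Qed.

Lemma rhon_pos {R : realType} k m : 0 < rhon R k.+2 m.
Proof. elim: m => [|m IH] //=; rewrite powR_gt0 // divr_gt0 //. Qed.

Lemma rhon_pow {R : realType} k m : rhon R k.+2 m.+1 ^+ k.+2 = rhon R k.+2 m / (k.+2)%:R.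
Proof. rewrite /= root_pow // divr_ge0 //; exact/ltW/rhon_pos. Qed.

Lemma rho_le1 {R : realType} k : rho R k.+2 <= 1.
Proof.
rewrite -(ler_pXn2r (n := k.+1)) // ?nnegrE ?(ltW (rho_pos _)) // rho_pow expr1n.
by rewrite invf_le1 // ler1n.
Qed.

Lemma rho_ge {R : realType} k : (k.+2%:R : R)^-1 <= rho R k.+2.
Proof.
rewrite -rho_pow exprS -[leRHS]mulr1 ler_wpM2l ?(ltW (rho_pos _)) //.
apply: exprn_ile1; [exact: ltW (rho_pos _) | exact: rho_le1].
Qed.

Lemma rho_pow2 {R : realType} k : rho R k.+2 ^+ k.+2 = rho R k.+2 / k.+2%:R.
Proof. by rewrite exprS rho_pow. Qed.

Lemma rhon_ge {R : realType} k m : rho R k.+2 <= rhon R k.+2 m.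
Proof.
elim: m => [|m IH]; first exact: rho_le1.
rewrite -(ler_pXn2r (n := k.+2)) // ?nnegrE ?(ltW (rho_pos _)) ?(ltW (rhon_pos _ _)) //.
by rewrite rhon_pow rho_pow2 ler_pM2r // invr_gt0.
Qed.

Lemma rhon_le1 {R : realType} k m : rhon R k.+2 m <= 1.
Proof.
elim: m => [|m IH] //.
rewrite -(ler_pXn2r (n := k.+2)) // ?nnegrE ?(ltW (rhon_pos _ _)) // rhon_pow expr1n.
apply: le_trans (_ : 1 / k.+2%:R <= 1); last by rewrite mul1r invf_le1 // ler1n.
by apply: ler_wpM2r; first by rewrite invr_ge0.
Qed.

Lemma lim_bound {R : realType} {K : closedFieldType} {abs : K -> R} {p} (HK : is_Cp abs p)
  (s : nat -> K) v B :
  (forall e : R, 0 < e -> exists N, forall n, (N <= n)%N -> abs (s n - v) < e) ->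
  (forall n, abs (s n) <= B) -> abs v <= B.
Proof.
move=> hs hB; apply/ler_addgt0Pr => e e0.
have [N hN] := hs e e0.
have -> : v = s N + (- (s N - v)) by rewrite opprB addrC subrK.
apply: (absD_le HK).
  by apply: le_trans (hB N) _; rewrite lerDl ltW.
rewrite (absN HK); apply: le_trans (ltW (hN N (leqnn N))) _.
by rewrite lerDr (le_trans (Cp_abs_ge0 HK (s 0%N)) (hB 0%N)).
Qed.

Lemma coef_bound {R : realType} {K : closedFieldType} {abs : K -> R} {p} (HK : is_Cp abs p)
  {rhat : R} {a : nat -> K} {c} : 1 <= rhat -> (forall i, abs (a i) * rhat ^+ i <= c) ->
  forall i, abs (a i) <= c.
Proof.
move=> hr hc i; apply: le_trans (hc i).
by rewrite -[leLHS]mulr1 ler_wpM2l ?(Cp_abs_ge0 HK) // exprn_ege1.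
Qed.

Lemma Q_bound {R : realType} {K : closedFieldType} {abs : K -> R} {p} (HK : is_Cp abs p)
  (rhat : R) (a : nat -> K) (Qf : K -> K) c : 1 <= rhat -> (forall i, abs (a i) * rhat ^+ i <= c) ->
  (forall z, abs z <= rhat -> series_sums abs a z (Qf z)) ->
  forall w, abs w <= 1 -> abs (Qf w) <= c.
Proof.
move=> hr hc hQ w hw.
have c0 : 0 <= c := le_trans (Cp_abs_ge0 HK (a 0%N)) (coef_bound HK hr hc 0%N).
apply: (lim_bound HK (fun n => \sum_(i < n) a i * w ^+ i)).
  by apply: hQ; exact: le_trans hw hr.
move=> n; apply: (abs_sum HK) => // i.
have g := Cp_abs_ge0 HK.
rewrite (Cp_absM HK) (absX HK) -[leRHS]mulr1; apply: ler_pM; rewrite ?exprn_ge0 //.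
  exact: (coef_bound HK hr hc).
exact: exprn_ile1.
Qed.

Lemma Q_diff {R : realType} {K : closedFieldType} {abs : K -> R} {p} (HK : is_Cp abs p)
  (rhat : R) (a : nat -> K) (Qf : K -> K) c : 1 <= rhat -> (forall i, abs (a i) * rhat ^+ i <= c) ->
  (forall z, abs z <= rhat -> series_sums abs a z (Qf z)) ->
  forall w0 w1, abs w0 <= 1 -> abs w1 <= 1 -> abs (Qf w0 - Qf w1) <= c * abs (w0 - w1).
Proof.
move=> hr hc hQ w0 w1 h0 h1.
have g := Cp_abs_ge0 HK.
have c0 : 0 <= c := le_trans (Cp_abs_ge0 HK (a 0%N)) (coef_bound HK hr hc 0%N).
apply: (lim_bound HK (fun n => \sum_(i < n) a i * w0 ^+ i - \sum_(i < n) a i * w1 ^+ i)).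
  move=> e e0.
  have [N0 hN0] := hQ w0 (le_trans h0 hr) e e0.
  have [N1 hN1] := hQ w1 (le_trans h1 hr) e e0.
  exists (maxn N0 N1) => n hn.
  have -> : \sum_(i < n) a i * w0 ^+ i - \sum_(i < n) a i * w1 ^+ i - (Qf w0 - Qf w1)
    = (\sum_(i < n) a i * w0 ^+ i - Qf w0) + - (\sum_(i < n) a i * w1 ^+ i - Qf w1) by ring.
  apply: (absD_lt HK); rewrite ?(absN HK).
    by apply: hN0; apply: leq_trans hn; exact: leq_maxl.
  by apply: hN1; apply: leq_trans hn; exact: leq_maxr.
move=> n; rewrite -sumrB; apply: (abs_sum HK); first by rewrite mulr_ge0.
move=> i; rewrite -mulrBr (Cp_absM HK); apply: ler_pM => //.
  exact: (coef_bound HK hr hc).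
case: (nat_of_ord i) => [|j]; first by rewrite !expr0 subrr (Cp_abs0 HK).
by apply: le_trans (abs_XX HK _ _ _ j ler01 h0 h1) _; rewrite expr1n mul1r.
Qed.

Lemma absV {R : realType} {K : closedFieldType} {abs : K -> R} {p} (HK : is_Cp abs p) (x : K) :
  x != 0 -> abs (x^-1) = (abs x)^-1.
Proof.
move=> hx; have := Cp_absM HK x x^-1; rewrite mulfV // (abs1 HK) => h.
have ha : abs x != 0 by apply/eqP => /(Cp_abs_eq0 HK) /eqP; rewrite (negPf hx).
by apply: (mulfI ha); rewrite -h mulfV.
Qed.

Lemma pK_neq0 {R : realType} {K : closedFieldType} {abs : K -> R} {k} (HK : is_Cp abs k.+2) :
  (k.+2%:R : K) != 0.
Proof.
apply/eqP => h; have := Cp_absp HK; rewrite h (Cp_abs0 HK) => /esym/eqP.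
by rewrite invr_eq0 pnatr_eq0.
Qed.

Lemma abs_binom {R : realType} {K : closedFieldType} {abs : K -> R} {k} (HK : is_Cp abs k.+2) j :
  (0 < j < k.+2)%N -> abs ('C(k.+2, j)%:R : K) <= (k.+2%:R)^-1.
Proof.
move=> hj; have /dvdnP [q hq] := prime_dvd_bin (Cp_prime HK) hj.
rewrite hq natrM (Cp_absM HK) (Cp_absp HK) mulrC -[leRHS]mulr1; apply: ler_wpM2l.
  by rewrite invr_ge0.
have := abs_nat HK q. move=> hh. exact: hh.
Qed.

Lemma lerX {R : realType} (x y : R) n : 0 <= x -> x <= y -> x ^+ n <= y ^+ n.
Proof. move=> hx hxy; apply: lerXn2r => //; rewrite nnegrE //; exact: le_trans hxy. Qed.

Lemma binom_bound {R : realType} {K : closedFieldType} {abs : K -> R} {k} (HK : is_Cp abs k.+2)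
  (w d : K) (r : R) : 0 <= r -> abs w <= r -> abs d <= r -> (k.+2%:R)^-1 <= r ->
  abs d ^+ k.+1 <= r ^+ k.+2 ->
  abs ((w + d) ^+ k.+2 - w ^+ k.+2) <= r ^+ k.+2 * abs d.
Proof.
move=> r0 hw hd hP hdk.
have g := Cp_abs_ge0 HK. have gd := g d. have gw := g w.
rewrite exprDn big_ord_recl /= subn0 expr0 mulr1 bin0 mulr1n addrC addKr.
apply: (abs_sum HK); first by rewrite mulr_ge0 ?exprn_ge0.
move=> i; rewrite -mulr_natr (Cp_absM HK) (Cp_absM HK) !(absX HK).
have hi : (i < k.+2)%N := ltn_ord i.
case: (ltnP i k.+1) => hik.
- have he : (k.+1 - i + i = k.+1)%N by rewrite subnK // ltnW.
  have -> : r ^+ k.+2 * abs d = r ^+ (k.+1 - i) * (r ^+ i * (r * abs d)).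
    by rewrite mulrA -exprD he mulrA -exprSr.
  have -> : bump 0 i = i.+1 by [].
  rewrite subSS [abs d ^+ _.+1]exprSr -!mulrA.
  have gC := g ('C(k.+2, i.+1)%:R).
  apply: ler_pM; [exact: exprn_ge0 | by rewrite mulr_ge0 ?exprn_ge0 ?mulr_ge0 | exact: lerX|].
  apply: ler_pM; [exact: exprn_ge0 | by rewrite mulr_ge0 | exact: lerX|].
  rewrite mulrC; apply: ler_pM => //.
  by apply: le_trans (abs_binom HK i.+1 _) hP; apply/andP; split; last rewrite ltnS.
- have -> : nat_of_ord i = k.+1 by apply/eqP; rewrite eqn_leq hik -ltnS hi.
  have -> : bump 0 k.+1 = k.+2 by []. rewrite subnn expr0 mul1r binn (abs1 HK) mulr1 exprS mulrC.
  by apply: ler_wpM2r.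
Qed.

Theorem lemma3p9 (R : realType) (K : closedFieldType) (abs : K -> R) (p : nat)
  (HK : is_Cp abs p)
  (rhat : R) (Hrhat_val : exists w : K, w != 0 /\ abs w = rhat) (Hrhat : 1 < rhat)
  (a : nat -> K) (Qf : K -> K)
  (* Q is in H(B): coefficients with |a_i| rhat^i -> 0 *)
  (Ha_conv : forall e : R, 0 < e -> exists N, forall i, (N <= i)%N -> abs (a i) * rhat ^+ i < e)
  (* Qf is the sum of the series on B *)
  (HQf : forall z, abs z <= rhat -> series_sums abs a z (Qf z))
  (* ||Q||_B = sup_i |a_i| rhat^i < rho *)
  (HQnorm : exists c : R, c < rho R p /\ forall i, abs (a i) * rhat ^+ i <= c)
  (lam : K) (Hlam : abs (lam - 1) < 1)
  (* h = h(lambda): the fixed point of Q*_lambda = P_lambda + Q in the disc *)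
  (h : K) (Hh_fix : Plam p lam h + Qf h = h)
  (Hh_disc : abs (h - 1) <= abs (Qf 1) / p%:R) :
  (forall (m : nat) (z0 z1 : K), (1 <= m)%N ->
      abs z0 = rhon R p m -> abs z1 = rhon R p m -> abs (z0 - z1) <= Sconst R p ->
      abs (Qlam p Qf lam h z0 - Qlam p Qf lam h z1) <= rhon R p m.-1 * abs (z0 - z1))
  /\
  (forall z0 z1 : K, abs (z0 - 1) < 1 -> abs (z1 - 1) < 1 ->
      abs (Qlam p Qf lam h z0 - Qlam p Qf lam h z1) = p%:R * abs (z0 - z1)).
Proof.
have g := Cp_abs_ge0 HK.
have [k hk] : exists k, p = k.+2.
  by move: (prime_gt1 (Cp_prime HK)); case: (p) => [|[|k]] //; exists k.
subst p.
have [c [hcr hc]] := HQnorm.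
have hr1 : 1 <= rhat := ltW Hrhat.
have c0 : 0 <= c := le_trans (g (a 0%N)) (coef_bound HK hr1 hc 0%N).
have P0 : 0 < (k.+2%:R : R) by [].
have P1 : 1 < (k.+2%:R : R) by rewrite ltr1n.
have pK0 := pK_neq0 HK.
have hlam1 : abs lam = 1.
  have -> : lam = 1 + (lam - 1) by rewrite addrC subrK.
  by rewrite (absD_strict HK) ?(abs1 HK).
have hlp : abs (lam / k.+2%:R) = k.+2%:R.
  by rewrite (Cp_absM HK) (absV HK) // (Cp_absp HK) invrK hlam1 mul1r.
have hQ1 : abs (Qf 1) <= c by apply: (Q_bound HK _ _ _ _ hr1 hc HQf); rewrite (abs1 HK).
have hrho1 := rho_le1 (R := R) k.
have hdel : abs (h - 1) < rho R k.+2.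
  apply: le_lt_trans Hh_disc _; apply: le_lt_trans hcr.
  rewrite ler_pdivrMr //; exact: le_trans hQ1 (@ler_peMr _ _ _ c0 (ltW P1)).
have eQ : forall z0 z1, Qlam k.+2 Qf lam h z0 - Qlam k.+2 Qf lam h z1 =
   (Plam k.+2 lam (z0 + h - 1) - Plam k.+2 lam (z1 + h - 1)) + (Qf (z0 + h - 1) - Qf (z1 + h - 1)).
  by move=> z0 z1; rewrite /Qlam; ring.
have eP : forall w0 w1, Plam k.+2 lam w0 - Plam k.+2 lam w1 =
   lam / k.+2%:R * (w0 ^+ k.+2 - w1 ^+ k.+2) + (1 - lam / k.+2%:R) * (w0 ^+ k.+3 - w1 ^+ k.+3).
  by move=> w0 w1; rewrite /Plam; ring.
split.
- move=> m z0 z1 hm h0 h1 hd.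
  case: m hm h0 h1 => [//|m] _ h0 h1 /=.
  have r0 := rhon_pos (R := R) k m.+1.
  have rle1 := rhon_le1 (R := R) k m.+1.
  have rge := rhon_ge (R := R) k m.+1.
  have rge' := rhon_ge (R := R) k m.
  have hw : forall z, abs z = rhon R k.+2 m.+1 -> abs (z + h - 1) = rhon R k.+2 m.+1.
    by move=> z hz; rewrite -addrA (absD_strict HK) // hz; exact: lt_le_trans hdel rge.
  have ed : (z0 + h - 1) - (z1 + h - 1) = z0 - z1 by ring.
  rewrite eQ eP.
  move: (hw z0 h0) (hw z1 h1) ed; set w0 := z0 + h - 1; set w1 := z1 + h - 1 => hw0 hw1 ed.
  rewrite -ed in hd *.
  set r := rhon R k.+2 m.+1 in r0 rle1 rge hw0 hw1 *.
  have hw0l : abs w0 <= r by rewrite hw0.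
  have hw1l : abs w1 <= r by rewrite hw1.
  have hdr : abs (w0 - w1) <= r by apply: (absD_le HK); rewrite ?(absN HK) ?hw0 ?hw1.
  have hrp : r ^+ k.+2 = rhon R k.+2 m / k.+2%:R by rewrite /r rhon_pow.
  have hX : abs (w0 ^+ k.+2 - w1 ^+ k.+2) <= r ^+ k.+2 * abs (w0 - w1).
    have := binom_bound HK w1 (w0 - w1) r (ltW r0) hw1l hdr.
    rewrite [w1 + _]addrC subrK; apply.
      exact: le_trans (rho_ge k) rge.
    apply: le_trans (lerX _ _ k.+1 (g _) hd) _.
    by rewrite S_pow hrp ler_wpM2r // invr_ge0.
  have hY : abs (w0 ^+ k.+3 - w1 ^+ k.+3) <= r ^+ k.+2 * abs (w0 - w1).
    exact: (abs_XX HK r w0 w1 k.+2 (ltW r0) hw0l hw1l).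
  have hgoal : rhon R k.+2 m * abs (w0 - w1) = k.+2%:R * (r ^+ k.+2 * abs (w0 - w1)).
    by rewrite hrp mulrA [_ * (_ / _)]mulrC divfK // gt_eqF.
  apply: (absD_le HK); [apply: (absD_le HK)|].
  + rewrite (Cp_absM HK) hlp hgoal; apply: ler_wpM2l => //; exact: ltW.
  + rewrite (Cp_absM HK) hgoal; apply: ler_pM => //.
    apply: (absD_le HK); [rewrite (abs1 HK); exact: ltW | by rewrite (absN HK) hlp].
  + apply: le_trans (Q_diff HK _ _ _ _ hr1 hc HQf w0 w1 (le_trans hw0l rle1) (le_trans hw1l rle1)) _.
    apply: ler_wpM2r => //; apply: le_trans rge'; exact: ltW.
- move=> z0 z1 h0 h1.
  have hw : forall z, abs (z - 1) < 1 -> abs (z + h - 1 - 1) < 1 /\ abs (z + h - 1) = 1.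
    move=> z hz.
    have h2 : abs (z + h - 1 - 1) < 1.
      have -> : z + h - 1 - 1 = (z - 1) + (h - 1) by ring.
      by apply: (absD_lt HK) => //; exact: lt_le_trans hdel hrho1.
    split => //.
    have -> : z + h - 1 = 1 + (z + h - 1 - 1) by ring.
    by rewrite (absD_strict HK) ?(abs1 HK).
  have [e01|ne01] := eqVneq z0 z1.
    by rewrite e01 !subrr (Cp_abs0 HK) mulr0.
  have ed : (z0 + h - 1) - (z1 + h - 1) = z0 - z1 by ring.
  have [hw0' hw0] := hw z0 h0; have [hw1' hw1] := hw z1 h1.
  rewrite eQ eP.
  move: hw0' hw0 hw1' hw1 ed; set w0 := z0 + h - 1; set w1 := z1 + h - 1 => hw0' hw0 hw1' hw1 ed.
  rewrite -ed in ne01 *.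
  have eq_le_ : forall w, abs w = 1 -> abs w <= 1 by move=> w ->.
  have d0 : 0 < abs (w0 - w1).
    rewrite lt_def g andbT; apply/eqP => /(Cp_abs_eq0 HK); rewrite ed => /eqP; by rewrite subr_eq0 (negPf ne01).
  have -> : lam / k.+2%:R * (w0 ^+ k.+2 - w1 ^+ k.+2) + (1 - lam / k.+2%:R) * (w0 ^+ k.+3 - w1 ^+ k.+3) + (Qf w0 - Qf w1)
    = - (lam / k.+2%:R * w0 ^+ k.+2 * (w0 - w1)) +
      ((w0 ^+ k.+2 - w1 ^+ k.+2) * (lam / k.+2%:R * (1 - w1) + w1) + w0 ^+ k.+2 * (w0 - w1) + (Qf w0 - Qf w1)).
    by rewrite !exprS; ring.
  have hmain : abs (- (lam / k.+2%:R * w0 ^+ k.+2 * (w0 - w1))) = k.+2%:R * abs (w0 - w1).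
    by rewrite (absN HK) (Cp_absM HK) (Cp_absM HK) hlp (absX HK) hw0 expr1n mulr1.
  rewrite [abs (- _ + _)](absD_strict HK) hmain //.
  apply: (absD_lt HK); [apply: (absD_lt HK)|].
  + rewrite (Cp_absM HK).
    have hX : abs (w0 ^+ k.+2 - w1 ^+ k.+2) <= abs (w0 - w1).
      by apply: le_trans (abs_XX HK 1 w0 w1 k.+1 ler01 (ltac:(by rewrite hw0)) (ltac:(by rewrite hw1))) _; rewrite expr1n mul1r.
    have hZ : abs (lam / k.+2%:R * (1 - w1) + w1) < k.+2%:R.
      apply: (absD_lt HK); last by rewrite hw1.
      rewrite (Cp_absM HK) hlp -[ltRHS]mulr1 ltr_pM2l // -(absN HK) opprB //.
    apply: le_lt_trans (ler_wpM2r (g _) hX) _.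
    by rewrite mulrC ltr_pM2r.
  + by rewrite (Cp_absM HK) (absX HK) hw0 expr1n mul1r ltr_pMl.
  + apply: le_lt_trans (Q_diff HK _ _ _ _ hr1 hc HQf w0 w1 (eq_le_ w0 hw0) (eq_le_ w1 hw1)) _.
    rewrite ltr_pM2r //; apply: lt_le_trans hcr _; apply: le_trans hrho1 _; exact: ltW.
Qed.
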